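(* Let $N\ge 1$ be an integer and $\lambda>0$, $\beta>0$, $\alpha>1$ real. For each positive divisor $m$ of $N$ put $c=N/m$, $$\mathbb{E}[T_{\text{job}}(m)]=\frac{\beta m\alpha}{m\alpha-1},\qquad a(m)=\lambda\,\mathbb{E}[T_{\text{job}}(m)],\qquad P_b(m)=\frac{a(m)^{N/m}/(N/m)!}{\sum_{j=0}^{N/m}a(m)^{j}/j!}.$$ (i) If $\alpha\ge 1.5$, then $P_b(m)$ is increasing in $m$ over the positive divisors $m$ of $N$, and hence attains its minimum at $m=1$ (i.e. $c=N$). (ii) If $\alpha<1.5$ and $N$ is even, then the minimum of $P_b(m)$ over the positive divisors $m$ of $N$ equals $\min\{P_b(1),P_b(2)\}$.
   Context: Model: an edge system has $N$ workers split into $c=N/m$ groups of $m$ workers (replication factor $m$, assumed to divide $N$). Jobs arrive as a Poisson process of rate $\lambda$; each job is replicated to the $m$ workers of a free group, and a job finding all groups busy is blocked. Each worker's service time is Pareto $\mathrm{Pareto}(\beta,\alpha)$ (scale $\beta$, tail index $\alpha>1$, i.e. $\Pr(X>x)=(\beta/x)^\alpha$ for $x\ge\beta$); the job-computing time (minimum of $m$ i.i.d. copies) is $\mathrm{Pareto}(\beta,m\alpha)$ with mean $\frac{\beta m\alpha}{m\alpha-1}$. The system is an M/G/c/c loss queue, so the job-blocking probability is the Erlang B formula $P_b(m)$ above. *)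

(* Defs.v *)
From Stdlib Require Import Reals Lra Lia Arith.
Open Scope R_scope.

Definition ETjob (beta alpha : R) (m : nat) : R :=
  beta * INR m * alpha / (INR m * alpha - 1).

Definition load (lam beta alpha : R) (m : nat) : R := lam * ETjob beta alpha m.

Definition erlangB (c : nat) (a : R) : R :=
  (a ^ c / INR (fact c)) / sum_f_R0 (fun j => a ^ j / INR (fact j)) c.

Definition Pb (N : nat) (lam beta alpha : R) (m : nat) : R :=
  erlangB (N / m) (load lam beta alpha m).

(* Main.v *)
Require Import Defs.
From Stdlib Require Import Reals Lra Lia Arith.
Open Scope R_scope.

Fixpoint T (c : nat) (x : R) : R :=
  match c with 0%nat => 1 | S c' => 1 + INR (S c') * x * T c' x end.

Fixpoint ffr (c : R) (k : nat) : R :=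
  match k with 0%nat => 1 | S k' => ffr c k' * (c - INR k') end.

Fixpoint q (c : R) (k : nat) : R :=
  match k with 0%nat => 1 | S k' => q c k' * (1 - INR k' / c) end.

Lemma T_S c x : T (S c) x = 1 + INR (S c) * x * T c x.
Proof. reflexivity. Qed.

Definition U (c : nat) (y : R) := sum_f_R0 (fun k => y ^ k * q (INR c) k) c.

Lemma T_ge1 c x : 0 <= x -> 1 <= T c x.
Proof.
  intros Hx; induction c as [|c IH]; [simpl; lra|]; rewrite T_S.
  assert (0 <= INR (S c)) by apply pos_INR.
  assert (0 <= INR (S c) * x) by (apply Rmult_le_pos; lra).
  assert (0 <= INR (S c) * x * T c x) by (apply Rmult_le_pos; lra). lra.
Qed.

Lemma T_mono c x x' : 0 <= x -> x <= x' -> T c x <= T c x'.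
Proof.
  intros Hx Hxx; induction c as [|c IH]; [simpl; lra|]; rewrite T_S.
  assert (0 <= INR (S c)) by apply pos_INR.
  assert (1 <= T c x) by (apply T_ge1; lra).
  apply Rplus_le_compat_l. apply Rmult_le_compat.
  - apply Rmult_le_pos; lra.
  - lra.
  - apply Rmult_le_compat_l; lra.
  - exact IH.
Qed.

Lemma ffr_shift c k : (c + 1) * ffr c k = ffr (c + 1) (S k).
Proof.
  induction k as [|k IH].
  - simpl. ring.
  - change (ffr c (S k)) with (ffr c k * (c - INR k)).
    change (ffr (c+1) (S (S k))) with (ffr (c+1) (S k) * (c + 1 - INR (S k))).
    rewrite <- IH, S_INR. ring.
Qed.

Lemma T_sum c x : T c x = sum_f_R0 (fun k => x ^ k * ffr (INR c) k) c.
Proof.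
  induction c as [|c IH].
  - simpl. ring.
  - rewrite decomp_sum by lia. simpl pred. rewrite T_S.
    rewrite IH, scal_sum.
    assert (E : forall i, (i <= c)%nat ->
      x ^ S i * ffr (INR (S c)) (S i) = x ^ i * ffr (INR c) i * (INR (S c) * x)).
    { intros i _. rewrite S_INR, <- ffr_shift. simpl. ring. }
    rewrite (sum_eq _ _ c E). simpl. ring.
Qed.

Lemma ffr_q c k : c <> 0 -> ffr c k = c ^ k * q c k.
Proof.
  intros Hc; induction k as [|k IH]; simpl; [ring|].
  rewrite IH. field. exact Hc.
Qed.

Lemma T_U c x : (1 <= c)%nat -> T c x = U c (x * INR c).
Proof.
  intros Hc. rewrite T_sum. unfold U. apply sum_eq. intros i _.
  rewrite ffr_q, Rpow_mult_distr. ring.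
  apply not_0_INR; lia.
Qed.

Lemma q_mono c k : (1 <= c)%nat -> (k <= S c)%nat ->
  0 <= q (INR c) k <= q (INR (S c)) k.
Proof.
  intros Hc; induction k as [|k IH]; intros Hk; cbn [q]; [lra|].
  destruct IH as [H1 H2]; [lia|].
  assert (Hc0 : 0 < INR c) by (apply lt_0_INR; lia).
  assert (Hkc : INR k <= INR c) by (apply le_INR; lia).
  assert (Hk0 : 0 <= INR k) by apply pos_INR.
  rewrite S_INR.
  assert (F1 : 0 <= 1 - INR k / INR c).
  { assert (INR k / INR c <= 1). { apply (Rmult_le_reg_r (INR c)); [lra|].
      unfold Rdiv; rewrite Rmult_assoc, Rinv_l by lra; lra. } lra. }
  assert (F2 : INR k / (INR c + 1) <= INR k / INR c).
  { unfold Rdiv. apply Rmult_le_compat_l; [lra|]. apply Rinv_le_contravar; lra. }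
  split.
  - apply Rmult_le_pos; lra.
  - rewrite <- S_INR; apply Rmult_le_compat; try lra; rewrite S_INR; lra.
Qed.

Lemma q_pos c k : (1 <= c)%nat -> (k <= c)%nat -> 0 < q (INR c) k.
Proof.
  intros Hc; induction k as [|k IH]; intros Hk; cbn [q]; [lra|].
  assert (Hc0 : 0 < INR c) by (apply lt_0_INR; lia).
  assert (Hkc : INR k < INR c) by (apply lt_INR; lia).
  apply Rmult_lt_0_compat; [apply IH; lia|].
  assert (INR k / INR c < 1). { apply (Rmult_lt_reg_r (INR c)); [lra|].
      unfold Rdiv; rewrite Rmult_assoc, Rinv_l by lra; lra. } lra.
Qed.

Lemma U_step c y : (1 <= c)%nat -> 0 < y -> U c y < U (S c) y.
Proof.
  intros Hc Hy. unfold U. rewrite tech5.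
  assert (A : sum_f_R0 (fun k => y ^ k * q (INR c) k) c <=
              sum_f_R0 (fun k => y ^ k * q (INR (S c)) k) c).
  { apply sum_Rle. intros n Hn. apply Rmult_le_compat_l.
    apply pow_le; lra. apply q_mono; lia. }
  assert (B : 0 < y ^ S c * q (INR (S c)) (S c)).
  { apply Rmult_lt_0_compat. apply pow_lt; lra. apply q_pos; lia. }
  lra.
Qed.

Lemma U_mono c d y : (1 <= c)%nat -> 0 < y -> U c y < U (c + S d) y.
Proof.
  intros Hc Hy. induction d as [|d IH].
  - rewrite Nat.add_1_r. apply U_step; auto.
  - replace (c + S (S d))%nat with (S (c + S d)) by lia.
    eapply Rlt_trans; [exact IH|]. apply U_step; [lia|auto].
Qed.

Lemma sum_T c a : 0 < a ->
  sum_f_R0 (fun j => a ^ j / INR (fact j)) c = T c (/ a) * (a ^ c / INR (fact c)).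
Proof.
  intros Ha. induction c as [|c IH].
  - simpl. field.
  - rewrite tech5, IH, T_S.
    change (fact (S c)) with (S c * fact c)%nat. rewrite mult_INR.
    simpl pow.
    assert (INR (S c) <> 0) by (apply not_0_INR; lia).
    assert (INR (fact c) <> 0) by apply INR_fact_neq_0.
    field. repeat split; auto; lra.
Qed.

Lemma erlang_T c a : 0 < a -> erlangB c a = / T c (/ a).
Proof.
  intros Ha. unfold erlangB. rewrite sum_T by auto.
  assert (1 <= T c (/ a)) by (apply T_ge1; left; apply Rinv_0_lt_compat; auto).
  assert (a ^ c <> 0) by (apply pow_nonzero; lra).
  assert (INR (fact c) <> 0) by apply INR_fact_neq_0.
  field. repeat split; auto; lra.
Qed.

Lemma load_pos lam beta alpha m : 0 < lam -> 0 < beta -> 1 < alpha -> (0 < m)%nat ->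
  0 < load lam beta alpha m.
Proof.
  intros. unfold load, ETjob.
  assert (1 <= INR m) by (apply (le_INR 1); lia).
  assert (0 < INR m * alpha - 1) by nra.
  apply Rmult_lt_0_compat; auto. unfold Rdiv.
  apply Rmult_lt_0_compat; [|apply Rinv_0_lt_compat; auto].
  apply Rmult_lt_0_compat; [|lra]. apply Rmult_lt_0_compat; lra.
Qed.

Lemma cmp N lam beta alpha m1 m2 : (1 <= N)%nat -> 0 < lam -> 0 < beta -> 1 < alpha ->
  (0 < m1)%nat -> Nat.divide m1 N -> Nat.divide m2 N -> (m1 < m2)%nat ->
  INR m1 + INR m2 <= alpha * INR m1 * INR m2 ->
  Pb N lam beta alpha m1 < Pb N lam beta alpha m2.
Proof.
  intros HN Hl Hb Ha Hm1 [z1 E1] [z2 E2] Hlt Hal.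
  assert (D1 : (N / m1 = z1)%nat) by (subst N; apply Nat.div_mul; lia).
  assert (D2 : (N / m2 = z2)%nat) by (rewrite E2; apply Nat.div_mul; lia).
  assert (Hz2 : (1 <= z2)%nat) by nia.
  assert (Hz : (z2 < z1)%nat) by nia.
  unfold Pb. rewrite D1, D2.
  set (a1 := load lam beta alpha m1). set (a2 := load lam beta alpha m2).
  assert (Ha1 : 0 < a1) by (apply load_pos; auto).
  assert (Ha2 : 0 < a2) by (apply load_pos; auto; lia).
  rewrite !erlang_T by auto.
  assert (R1 : 0 < INR z1) by (apply lt_0_INR; lia).
  assert (R2 : 0 < INR z2) by (apply lt_0_INR; lia).
  assert (M1 : 1 <= INR m1) by (apply (le_INR 1); lia).
  assert (M12 : INR m1 < INR m2) by (apply lt_INR; auto).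
  assert (EN : INR z1 * INR m1 = INR z2 * INR m2) by (rewrite <- !mult_INR; f_equal; lia).
  assert (K : INR z2 * a1 <= INR z1 * a2).
  { unfold a1, a2, load, ETjob.
    set (A := INR m1) in *. set (B := INR m2) in *.
    assert (P1 : 0 < A * alpha - 1) by nra.
    assert (P2 : 0 < B * alpha - 1) by nra.
    assert (Z1 : INR z1 = INR z2 * B / A) by (apply (Rmult_eq_reg_r A); [|lra]; field_simplify; lra).
    rewrite Z1.
    assert (Eq : INR z2 * B / A * (lam * (beta * B * alpha / (B * alpha - 1))) -
                 INR z2 * (lam * (beta * A * alpha / (A * alpha - 1))) =
                 INR z2 * lam * beta * alpha * ((B - A) * (alpha * A * B - A - B))
                 / (A * (A * alpha - 1) * (B * alpha - 1))) by (field; lra).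
    assert (0 <= INR z2 * lam * beta * alpha * ((B - A) * (alpha * A * B - A - B))
                 / (A * (A * alpha - 1) * (B * alpha - 1))).
    { unfold Rdiv. apply Rmult_le_pos.
      - repeat apply Rmult_le_pos; lra.
      - left; apply Rinv_0_lt_compat. repeat apply Rmult_lt_0_compat; lra. }
    lra. }
  assert (T1 : 1 <= T z1 (/ a1)) by (apply T_ge1; left; apply Rinv_0_lt_compat; auto).
  assert (T2 : 1 <= T z2 (/ a2)) by (apply T_ge1; left; apply Rinv_0_lt_compat; auto).
  apply Rinv_lt_contravar; [nra|].
  set (y := / a2 * INR z2).
  assert (Hy : 0 < y) by (unfold y; apply Rmult_lt_0_compat; auto; apply Rinv_0_lt_compat; auto).
  assert (Step1 : T z1 (y / INR z1) <= T z1 (/ a1)).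
  { apply T_mono.
    { unfold Rdiv; left; apply Rmult_lt_0_compat; [auto|apply Rinv_0_lt_compat; auto]. }
    unfold y.
    replace (/ a2 * INR z2 / INR z1) with ((INR z2 * a1) * / (a1 * a2 * INR z1)) by (field; lra).
    replace (/ a1) with ((INR z1 * a2) * / (a1 * a2 * INR z1)) by (field; lra).
    apply Rmult_le_compat_r; [|exact K].
    left; apply Rinv_0_lt_compat; apply Rmult_lt_0_compat; [apply Rmult_lt_0_compat|]; auto. }
  rewrite (T_U z1 (y / INR z1)) in Step1 by lia.
  replace (y / INR z1 * INR z1) with y in Step1 by (field; lra).
  rewrite (T_U z2) by lia. fold y.
  destruct (Nat.le_exists_sub (S z2) z1) as [d [Hd _]]; [lia|].
  assert (U z2 y < U z1 y).
  { replace z1 with (z2 + S d)%nat by lia. apply U_mono; auto. }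
  lra.
Qed.

Theorem lemma1 (N : nat) (lam beta alpha : R) :
  (1 <= N)%nat -> 0 < lam -> 0 < beta -> 1 < alpha ->
  (3 / 2 <= alpha ->
     (forall m1 m2 : nat, (0 < m1)%nat -> Nat.divide m1 N -> Nat.divide m2 N ->
        (m1 < m2)%nat -> Pb N lam beta alpha m1 < Pb N lam beta alpha m2) /\
     (forall m : nat, (0 < m)%nat -> Nat.divide m N ->
        Pb N lam beta alpha 1 <= Pb N lam beta alpha m)) /\
  (alpha < 3 / 2 -> Nat.Even N ->
     forall m : nat, (0 < m)%nat -> Nat.divide m N ->
        Rmin (Pb N lam beta alpha 1) (Pb N lam beta alpha 2) <= Pb N lam beta alpha m).
Proof.
  intros HN Hl Hb Ha.
  assert (G1 : 3 / 2 <= alpha -> forall m1 m2 : nat, (0 < m1)%nat -> Nat.divide m1 N -> Nat.divide m2 N ->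
        (m1 < m2)%nat -> Pb N lam beta alpha m1 < Pb N lam beta alpha m2).
  { intros Ha' m1 m2 H0 D1 D2 Hlt. apply cmp; auto.
    assert (M1 : 1 <= INR m1) by (apply (le_INR 1); lia).
    assert (M2 : INR m1 + 1 <= INR m2) by (rewrite <- S_INR; apply le_INR; lia).
    destruct (Nat.eq_dec m1 1) as [->|Hne].
    - simpl INR in *. assert (0 <= (alpha - 3/2) * (INR m2 - 2)) by (apply Rmult_le_pos; lra). nra.
    - assert (2 <= INR m1) by (apply (le_INR 2); lia).
      assert (1 <= (INR m1 - 1) * (INR m2 - 1)) by nra.
      assert (0 <= (alpha - 1) * (INR m1 * INR m2)) by (apply Rmult_le_pos; nra). nra. }
  split.
  - intros Ha'. split; [apply G1; auto|].
    intros m H0 D. destruct (Nat.eq_dec m 1) as [->|Hne]; [lra|].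
    left. apply G1; auto. apply Nat.divide_1_l. lia.
  - intros Ha' [h Eh] m H0 D.
    destruct (Nat.eq_dec m 1) as [->|H1]; [apply Rmin_l|].
    destruct (Nat.eq_dec m 2) as [->|H2]; [apply Rmin_r|].
    eapply Rle_trans; [apply Rmin_r|]. left. apply cmp; auto; try lia.
    + exists h. lia.
    + assert (3 <= INR m) by (replace 3 with (INR 3) by (simpl; ring); apply le_INR; lia).
      assert (0 <= (alpha - 1) * INR m) by (apply Rmult_le_pos; lra). simpl INR. nra.
Qed.
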